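(* Let $G$ be a complete multipartite digraph with the parity property, and let $A,B$ be two distinct maximal antichains of $G$. Then there exist subsets $R_{AB}\subseteq A$ and $S_{AB}\subseteq B$ such that for all $x\in A$ and $y\in B$: $x\to y$ if and only if ($x\in R_{AB}\iff y\in S_{AB}$).
   Context: A digraph is a set with an irreflexive binary relation $\to$ such that $x\to y$ and $y\to x$ never both hold; write $x\perp y$ if neither $x\to y$ nor $y\to x$ (with $x\perp x$). A digraph is complete multipartite if $\perp$ is an equivalence relation; its maximal antichains are the $\perp$-classes, and any two points in different classes are joined by an edge in exactly one direction. The digraph has the parity property if for every two distinct maximal antichains $A,B$, every distinct $a,a'\in A$ and every distinct $b,b'\in B$, the number of edges pointing from a vertex of $\{a,a'\}$ to a vertex of $\{b,b'\}$ is even. *)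

(* Defs.v *)
From Stdlib Require Import Classical ClassicalEpsilon Arith.

Definition is_digraph {T : Type} (arr : T -> T -> Prop) : Prop :=
  (forall x, ~ arr x x) /\ (forall x y, arr x y -> arr y x -> False).

Definition perp {T : Type} (arr : T -> T -> Prop) (x y : T) : Prop :=
  ~ arr x y /\ ~ arr y x.

Definition complete_multipartite {T : Type} (arr : T -> T -> Prop) : Prop :=
  (forall x, perp arr x x) /\
  (forall x y, perp arr x y -> perp arr y x) /\
  (forall x y z, perp arr x y -> perp arr y z -> perp arr x z).

Definition antichain {T : Type} (arr : T -> T -> Prop) (A : T -> Prop) : Prop :=
  forall x y, A x -> A y -> perp arr x y.

Definition maximal_antichain {T : Type} (arr : T -> T -> Prop) (A : T -> Prop) : Prop :=
  antichain arr A /\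
  (forall B : T -> Prop, antichain arr B -> (forall x, A x -> B x) -> forall x, B x -> A x).

Definition ind (P : Prop) : nat :=
  if excluded_middle_informative P then 1 else 0.

Definition parity_property {T : Type} (arr : T -> T -> Prop) : Prop :=
  forall A B : T -> Prop,
    maximal_antichain arr A -> maximal_antichain arr B ->
    (exists z, A z /\ ~ B z) \/ (exists z, B z /\ ~ A z) ->  (* A <> B *)
    forall a a' b b', A a -> A a' -> a <> a' -> B b -> B b' -> b <> b' ->
      Nat.Even (ind (arr a b) + ind (arr a b') + ind (arr a' b) + ind (arr a' b')).

(* Main.v *)
Require Import Defs.
From Stdlib Require Import Classical ClassicalEpsilon Arith Lia.

Lemma ind_T (P : Prop) : P -> ind P = 1.
Proof. intro H; unfold ind; destruct (excluded_middle_informative P); tauto. Qed.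
Lemma ind_F (P : Prop) : ~ P -> ind P = 0.
Proof. intro H; unfold ind; destruct (excluded_middle_informative P); tauto. Qed.

Lemma key (P1 P2 P3 P4 : Prop) :
  Nat.Even (ind P1 + ind P2 + ind P3 + ind P4) -> (P1 <-> ((P2 <-> P4) <-> P3)).
Proof.
  intro H.
  destruct (classic P1) as [h1|h1]; [rewrite (ind_T _ h1) in H|rewrite (ind_F _ h1) in H];
  destruct (classic P2) as [h2|h2]; [rewrite (ind_T _ h2) in H|rewrite (ind_F _ h2) in H
                                    |rewrite (ind_T _ h2) in H|rewrite (ind_F _ h2) in H];
  destruct (classic P3) as [h3|h3]; try rewrite (ind_T _ h3) in H; try rewrite (ind_F _ h3) in H;
  destruct (classic P4) as [h4|h4]; try rewrite (ind_T _ h4) in H; try rewrite (ind_F _ h4) in H;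
  destruct H as [m Hm]; first [lia | tauto].
Qed.

Lemma even2 a b : Nat.Even (a + b + a + b).
Proof. exists (a + b). lia. Qed.
Lemma even2' a b : Nat.Even (a + a + b + b).
Proof. exists (a + b). lia. Qed.

Theorem lemma4p1 (T : Type) (arr : T -> T -> Prop)
  (Hd : is_digraph arr) (Hcm : complete_multipartite arr) (Hp : parity_property arr)
  (A B : T -> Prop) (HA : maximal_antichain arr A) (HB : maximal_antichain arr B)
  (HAB : (exists z, A z /\ ~ B z) \/ (exists z, B z /\ ~ A z)) :
  exists (R S : T -> Prop),
    (forall x, R x -> A x) /\ (forall y, S y -> B y) /\
    (forall x y, A x -> B y -> (arr x y <-> (R x <-> S y))).
Proof.
  destruct (classic (exists a, A a)) as [[a0 Ha0]|nA];
    [|exists (fun _ => False), (fun _ => False); split; [tauto|split;[tauto|]];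
      intros x y Ax; exfalso; eauto].
  destruct (classic (exists b, B b)) as [[b0 Hb0]|nB];
    [|exists (fun _ => False), (fun _ => False); split; [tauto|split;[tauto|]];
      intros x y Ax By; exfalso; eauto].
  exists (fun x => A x /\ (arr x b0 <-> arr a0 b0)), (fun y => B y /\ arr a0 y).
  split; [tauto|split;[tauto|]].
  intros x y Ax By.
  assert (E : Nat.Even (ind (arr x y) + ind (arr x b0) + ind (arr a0 y) + ind (arr a0 b0))).
  { destruct (classic (x = a0)) as [ex|nx]; [subst; apply even2|].
    destruct (classic (y = b0)) as [ey|ny]; [subst; apply even2'|].
    apply (Hp A B HA HB HAB); auto. }
  pose proof (key _ _ _ _ E). tauto.
Qed.
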